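(* Consider MDVI$(\alpha,K,M)$ with any $\alpha\in[0,1)$ and positive integers $K,M$ on an MDP as in the context, let $\delta\in(0,1)$, and let $\mathcal{E}_1$, $\mathcal{E}_2$ be the events defined in the context. On the event $\mathcal{E}_1\cap\mathcal{E}_2$, for every $k\in\{1,\dots,K-1\}$, $$\sigma(v_k) \leq 2H\min\left\{1,\ 2\max\{\alpha,\gamma\}^{k-1} + \frac{A_{\gamma,k-1}}{A_\infty} + 6H\sqrt{\frac{\iota_1}{M}}\right\}\mathbf{1} + \sigma(v^* )$$ (componentwise). Furthermore, $\sigma(v_0)=0$.
   Context: MDP: finite state set $\mathcal{X}$, finite action set $\mathcal{A}$, discount $\gamma\in[0,1)$, reward $r\in[-1,1]^{\mathcal{X}\times\mathcal{A}}$, transition kernel $P(y|x,a)$, $H=1/(1-\gamma)$, $(Pv)(x,a)=\sum_y P(y|x,a)v(y)$; $v^*$ is the optimal state-value function; $\mathbf 1$ the all-ones vector. MDVI$(\alpha,K,M)$: $s_0 = 0$, $w_0=w_{-1}=0$; for $k=0,\dots,K-1$: $v_k = w_k-\alpha w_{k-1}$; for each $(x,a)$, independent samples $y_{k,m,x,a}\sim P(\cdot|x,a)$, $m\in[M]$; $q_{k+1}(x,a) = r(x,a)+\frac{\gamma}{M}\sum_m v_k(y_{k,m,x,a})$; $s_{k+1}=q_{k+1}+\alpha s_k$; $w_{k+1}(x)=\max_a s_{k+1}(x,a)$. Notation: for $v\in\mathbb{R}^{\mathcal{X}}$, $\mathrm{Var}_P(v)(x,a) = (Pv^2)(x,a)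 - (Pv)^2(x,a)$ and $\sigma(v)=\sqrt{\mathrm{Var}_P(v)}$. $\widehat P_k v(x,a) = \frac1M\sum_m v(y_{k,m,x,a})$; $\varepsilon_k = \gamma\widehat P_{k-1}v_{k-1} - \gamma P v_{k-1}$; $E_k = \sum_{j=1}^k\alpha^{k-j}\varepsilon_j$; $A_\infty = 1/(1-\alpha)$; $A_{\gamma,k}=\sum_{j=0}^{k-1}\gamma^{k-j}\alpha^j$ (so $A_{\gamma,0}=0$); $\iota_1 = \log(8K|\mathcal{X}||\mathcal{A}|/\delta)$. $\mathcal{E}_1$: $\|E_k\|_\infty<3H\sqrt{A_\infty\iota_1/M}$ for all $k\in[K]$; $\mathcal{E}_2$: $\|\varepsilon_k\|_\infty<3H\sqrt{\iota_1/M}$ for all $k\in[K]$. *)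

(* Defs.v *)
From mathcomp Require Import all_boot all_order all_algebra.
From mathcomp Require Import reals exp.
Set Implicit Arguments. Unset Strict Implicit. Unset Printing Implicit Defensive.
Import Order.TTheory GRing.Theory Num.Theory.
Local Open Scope ring_scope.

Section MDVI.
Variables (R : realType) (X A : finType).

(* (P v)(x,a) = sum_y P(y|x,a) v(y);  P x a y stands for P(y|x,a). *)
Definition Pop (P : X -> A -> X -> R) (v : X -> R) : X -> A -> R :=
  fun x a => \sum_(y : X) P x a y * v y.

Definition VarP (P : X -> A -> X -> R) (v : X -> R) : X -> A -> R :=
  fun x a => Pop P (fun y => v y ^+ 2) x a - (Pop P v x a) ^+ 2.
Definition sigmaP (P : X -> A -> X -> R) (v : X -> R) : X -> A -> R :=
  fun x a => Num.sqrt (VarP P v x a).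

Definition is_kernel (P : X -> A -> X -> R) : Prop :=
  (forall x a y, 0 <= P x a y) /\ (forall x a, \sum_(y : X) P x a y = 1).

Definition maxA (a0 : A) (f : A -> R) : R := \big[Num.max/f a0]_(a : A) f a.

Definition bellman_opt (a0 : A) (gamma : R) (r : X -> A -> R)
  (P : X -> A -> X -> R) (v : X -> R) : Prop :=
  forall x, v x = maxA a0 (fun a => r x a + gamma * Pop P v x a).

(* Samples: y k m x a = y_{k,m,x,a}, m : 'I_M. *)
Variables (M : nat) (samples : nat -> 'I_M -> X -> A -> X).

Definition Phat (k : nat) (v : X -> R) : X -> A -> R :=
  fun x a => (M%:R)^-1 * \sum_(m < M) v (samples k m x a).

Variables (a0 : A) (alpha gamma : R) (r : X -> A -> R).

(* mdvi_state k = (s_k, w_k, w_{k-1}), with s_0 = 0, w_0 = w_{-1} = 0. *)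
Fixpoint mdvi_state (k : nat) : (X -> A -> R) * (X -> R) * (X -> R) :=
  match k with
  | 0 => (fun _ _ => 0, fun _ => 0, fun _ => 0)
  | k'.+1 =>
      let: (s, w, wp) := mdvi_state k' in
      let v := fun x => w x - alpha * wp x in
      let q := fun x a => r x a + gamma * Phat k' v x a in
      let s' := fun x a => q x a + alpha * s x a in
      let w' := fun x => maxA a0 (s' x) in
      (s', w', w)
  end.

Definition mdvi_s k := (mdvi_state k).1.1.
Definition mdvi_w k := (mdvi_state k).1.2.
Definition mdvi_wprev k := (mdvi_state k).2.

Definition mdvi_v (k : nat) : X -> R :=
  fun x => mdvi_w k x - alpha * mdvi_wprev k x.

Definition eps (P : X -> A -> X -> R) (k : nat) : X -> A -> R :=
  fun x a => gamma * Phat k.-1 (mdvi_v k.-1) x a - gamma * Pop P (mdvi_v k.-1) x a.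

Definition Ek (P : X -> A -> X -> R) (k : nat) : X -> A -> R :=
  fun x a => \sum_(1 <= j < k.+1) alpha ^+ (k - j) * eps P j x a.

End MDVI.

Definition Hor {R : realType} (gamma : R) : R := (1 - gamma)^-1.
Definition Ainf {R : realType} (alpha : R) : R := (1 - alpha)^-1.
Definition Agamma {R : realType} (alpha gamma : R) (k : nat) : R :=
  \sum_(0 <= j < k) gamma ^+ (k - j) * alpha ^+ j.
Definition iota1 {R : realType} (X A : finType) (K : nat) (delta : R) : R :=
  ln ((8 * K * #|X| * #|A|)%:R / delta).

(* Main.v *)
Require Import Defs.
From mathcomp Require Import all_boot all_order all_algebra.
From mathcomp Require Import reals exp.
From mathcomp Require Import ring lra.
Import Order.TTheory GRing.Theory Num.Theory.
Local Open Scope ring_scope.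
Set Implicit Arguments. Unset Strict Implicit.

Section Aux.
Variables (R : realType) (X A : finType).

Lemma maxA_ex (a0 : A) (f : A -> R) : exists a, Defs.maxA a0 f = f a.
Proof.
rewrite /Defs.maxA; apply: (big_ind (fun y => exists a, y = f a)).
- by exists a0.
- move=> y z [a1 ->] [a2 ->]; rewrite maxEle; case: ifP => _; eauto.
- move=> a _; by exists a.
Qed.

Lemma maxA_ge (a0 : A) (f : A -> R) a : f a <= Defs.maxA a0 f.
Proof. by rewrite /Defs.maxA (bigD1 a) //= le_max lexx. Qed.

Lemma maxA_absdiff (a0 : A) (f g : A -> R) c B : 0 <= c ->
  (forall a, `|f a - c * g a| <= B) -> `|Defs.maxA a0 f - c * Defs.maxA a0 g| <= B.
Proof.
move=> c0 H.
have [a1 e1] := maxA_ex a0 f; have [a2 e2] := maxA_ex a0 g.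
have h1 := maxA_ge a0 f a2; have h2 := maxA_ge a0 g a1.
rewrite e1 e2 in h1 h2 *.
have h3 : c * g a1 <= c * g a2 by apply: ler_wpM2l.
move: (H a1) (H a2); rewrite !ler_norml => /andP[? ?] /andP[? ?].
apply/andP; split; lra.
Qed.

Lemma maxA_abs (a0 : A) (f : A -> R) B :
  (forall a, `|f a| <= B) -> `|Defs.maxA a0 f| <= B.
Proof.
move=> H; have := @maxA_absdiff a0 f f 0 B (lexx _).
rewrite mul0r subr0; apply => a; by rewrite mul0r subr0.
Qed.

Lemma maxA_const (a0 : A) (c : R) : Defs.maxA a0 (fun _ => c) = c.
Proof. by have [a ->] := maxA_ex a0 (fun _ : A => c). Qed.

Variable P : X -> A -> X -> R.
Hypothesis hP : is_kernel P.

Lemma Pop_ext f g x a : (forall y, f y = g y) -> Pop P f x a = Pop P g x a.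
Proof. by move=> H; rewrite /Pop; apply: eq_bigr => y _; rewrite H. Qed.

Lemma Pop_lin3 (f1 f2 : X -> R) c1 c2 c3 x a :
  Pop P (fun y => c1 * f1 y + c2 * f2 y + c3) x a
  = c1 * Pop P f1 x a + c2 * Pop P f2 x a + c3.
Proof.
rewrite /Pop.
transitivity (\sum_y (c1 * (P x a y * f1 y) + c2 * (P x a y * f2 y) + c3 * P x a y)).
  by apply: eq_bigr => y _; ring.
rewrite !big_split /= -!mulr_sumr; case: hP => _ ->; by rewrite mulr1.
Qed.

Lemma PopB f g c x a : Pop P (fun y => f y - c * g y) x a = Pop P f x a - c * Pop P g x a.
Proof.
transitivity (Pop P (fun y => 1 * f y + (-c) * g y + 0) x a).
  by apply: Pop_ext => y; ring.
rewrite Pop_lin3; ring.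
Qed.

Lemma Pop_le f g x a : (forall y, f y <= g y) -> Pop P f x a <= Pop P g x a.
Proof.
move=> H; rewrite /Pop; apply: ler_sum => y _; apply: ler_wpM2l => //.
by case: hP.
Qed.

Lemma Pop_const c x a : Pop P (fun _ => c) x a = c.
Proof.
transitivity (Pop P (fun y => 0 * (fun _ => 0) y + 0 * (fun _ => 0) y + c) x a).
  by apply: Pop_ext => y; ring.
rewrite Pop_lin3; ring.
Qed.

Lemma Pop_abs f B x a : (forall y, `|f y| <= B) -> `|Pop P f x a| <= B.
Proof.
move=> H; rewrite ler_norml; apply/andP; split.
- rewrite -(Pop_const (- B) x a); apply: Pop_le => y.
  by move: (H y); rewrite ler_norml => /andP[].
- rewrite -(Pop_const B x a); apply: Pop_le => y.
  by move: (H y); rewrite ler_norml => /andP[].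
Qed.

Lemma Pop_jensen g x a : (Pop P g x a) ^+ 2 <= Pop P (fun y => g y ^+ 2) x a.
Proof.
set m := Pop P g x a.
have : 0 <= Pop P (fun y => (g y - m) ^+ 2) x a.
  rewrite -(Pop_const 0 x a); apply: Pop_le => y; exact: sqr_ge0.
have -> : Pop P (fun y => (g y - m) ^+ 2) x a
        = 1 * Pop P (fun y => g y ^+ 2) x a + (- 2 * m) * Pop P g x a + m ^+ 2.
  rewrite -Pop_lin3; apply: Pop_ext => y; ring.
rewrite -/m; lra.
Qed.

Lemma sigma_bound v vs D x a : 0 <= D -> (forall y, `|v y - vs y| <= D) ->
  sigmaP P v x a <= D + sigmaP P vs x a.
Proof.
move=> D0 H.
set m := Pop P vs x a.
set V := VarP P vs x a.
have V0 : 0 <= V by rewrite /V /VarP -/m; have := Pop_jensen vs x a; rewrite -/m; lra.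
set s := sigmaP P vs x a.
have s0 : 0 <= s by apply: sqrtr_ge0.
have ss : s ^+ 2 = V by rewrite /s /sigmaP sqr_sqrtr.
set c := fun y => vs y - m.
have Ec2 : Pop P (fun y => c y ^+ 2) x a = V.
  rewrite /V /VarP -/m.
  have -> : Pop P (fun y => c y ^+ 2) x a =
    1 * Pop P (fun y => vs y ^+ 2) x a + (- 2 * m) * Pop P vs x a + m ^+ 2.
    rewrite -Pop_lin3; apply: Pop_ext => y; rewrite /c; ring.
  rewrite -/m; ring.
have Ec : Pop P (fun y => `|c y|) x a <= s.
  have J := Pop_jensen (fun y => `|c y|) x a.
  have J' : Pop P (fun y => `|c y| ^+ 2) x a = V.
    by rewrite -Ec2; apply: Pop_ext => y; rewrite real_normK // num_real.
  rewrite J' in J.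
  have e0 : 0 <= Pop P (fun y => `|c y|) x a.
    rewrite -(Pop_const 0 x a); apply: Pop_le => y; exact: normr_ge0.
  nra.
have Vv : VarP P v x a <= (D + s) ^+ 2.
  have h1 : VarP P v x a <= Pop P (fun y => (v y - m) ^+ 2) x a.
    have -> : Pop P (fun y => (v y - m) ^+ 2) x a =
      1 * Pop P (fun y => v y ^+ 2) x a + (- 2 * m) * Pop P v x a + m ^+ 2.
      rewrite -Pop_lin3; apply: Pop_ext => y; ring.
    rewrite /VarP; have := sqr_ge0 (Pop P v x a - m); nra.
  have h2 : Pop P (fun y => (v y - m) ^+ 2) x a <=
            1 * Pop P (fun y => c y ^+ 2) x a + (2 * D) * Pop P (fun y => `|c y|) x a + D ^+ 2.
    rewrite -Pop_lin3; apply: Pop_le => y.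
    have := H y; rewrite /c.
    set d := v y - vs y.
    have -> : v y - m = (vs y - m) + d by rewrite /d; ring.
    set cc := vs y - m => hd.
    have hc := normr_ge0 cc.
    have hcd : cc * d <= `|cc| * D.
      apply: le_trans (ler_norm _) _; rewrite normrM; apply: ler_wpM2l => //.
    have hd2 : d ^+ 2 <= D ^+ 2.
      rewrite -real_normK ?num_real //; apply: lerXn2r; rewrite ?nnegrE //.
    nra.
  rewrite Ec2 in h2; nra.
rewrite /sigmaP.
have w0 : 0 <= VarP P v x a by rewrite /VarP; have := Pop_jensen v x a; lra.
have t0 := sqrtr_ge0 (VarP P v x a).
have tt := sqr_sqrtr w0.
rewrite -/s; nra.
Qed.

End Aux.

Unset Implicit Arguments. Set Strict Implicit.

Section M.
Variables (R : realType) (X A : finType) (M : nat) (samples : nat -> 'I_M -> X -> A -> X).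
Variables (a0 : A) (alpha gamma : R) (r : X -> A -> R).

Local Notation s := (mdvi_s samples a0 alpha gamma r).
Local Notation w := (mdvi_w samples a0 alpha gamma r).
Local Notation wp := (mdvi_wprev samples a0 alpha gamma r).
Local Notation v := (mdvi_v samples a0 alpha gamma r).

Lemma s_S k x a : s k.+1 x a = r x a + gamma * Phat samples k (v k) x a + alpha * s k x a.
Proof.
rewrite /mdvi_s /mdvi_v /mdvi_w /mdvi_wprev /=.
by case: (mdvi_state samples a0 alpha gamma r k) => [[s0 w0] wp0].
Qed.

Lemma w_S k x : w k.+1 x = Defs.maxA a0 (s k.+1 x).
Proof.
rewrite /mdvi_s /mdvi_w /=.
by case: (mdvi_state samples a0 alpha gamma r k) => [[s0 w0] wp0].
Qed.

Lemma wp_S k x : wp k.+1 x = w k x.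
Proof.
rewrite /mdvi_wprev /mdvi_w /=.
by case: (mdvi_state samples a0 alpha gamma r k) => [[s0 w0] wp0].
Qed.

Lemma s_0 x a : s 0 x a = 0. Proof. by []. Qed.
Lemma w_0 x : w 0 x = 0. Proof. by []. Qed.
Lemma wp_0 x : wp 0 x = 0. Proof. by []. Qed.
End M.
Set Implicit Arguments. Unset Strict Implicit.

Fixpoint Aseq {R : realType} (al : R) n := if n is n'.+1 then 1 + al * Aseq al n' else 0.
Fixpoint Cseq {R : realType} (al g : R) n := if n is n'.+1 then g * Cseq al g n' + al ^+ n' else 0.

Section Seqs.
Variables (R : realType) (al g : R).
Hypothesis ha : 0 <= al < 1.

Lemma Aseq_S n : Aseq al n.+1 = Aseq al n + al ^+ n.
Proof.
elim: n => [|n IH]; first by rewrite /= expr0; ring.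
change (1 + al * Aseq al n.+1 = Aseq al n.+1 + al ^+ n.+1).
rewrite {1}IH exprS /=; ring.
Qed.

Lemma Aseq_ge0 n : 0 <= Aseq al n.
Proof.
case/andP: ha => h0 h1; elim: n => [|n IH] //=.
by apply: addr_ge0 => //; apply: mulr_ge0.
Qed.

Lemma Aseq_id n : (1 - al) * Aseq al n + al ^+ n = 1.
Proof.
elim: n => [|n IH] /=; first by rewrite expr0; ring.
rewrite exprS; transitivity ((1 - al) + al * ((1 - al) * Aseq al n + al ^+ n)); first ring.
rewrite IH; ring.
Qed.

Lemma Aseq_le n : (1 - al) * Aseq al n <= 1.
Proof.
have := Aseq_id n; have : 0 <= al ^+ n by apply: exprn_ge0; case/andP: ha.
move: ((1 - al) * Aseq al n) (al ^+ n) => p q; lra.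
Qed.

Lemma Ag_S n : Agamma al g n.+1 = g * Agamma al g n + g * al ^+ n.
Proof.
rewrite /Agamma (big_nat_recr n) ?leq0n // subSnn expr1.
congr (_ + _).
rewrite mulr_sumr; apply: eq_big_nat => j /andP[_ hj].
by rewrite (subSn (ltnW hj)) exprS mulrA.
Qed.

Lemma Ag_0 : Agamma al g 0 = 0.
Proof. by rewrite /Agamma big_nil. Qed.

Lemma Ag_ge0 n : 0 <= g -> 0 <= Agamma al g n.
Proof.
move=> g0; rewrite /Agamma; apply: sumr_ge0 => j _; apply: mulr_ge0; apply: exprn_ge0 => //.
by case/andP: ha.
Qed.

Lemma Ag_id n : (al - g) * Agamma al g n = g * al ^+ n - g ^+ n.+1.
Proof.
elim: n => [|n IH]; first by rewrite Ag_0 expr0 expr1; ring.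
rewrite Ag_S.
transitivity (g * ((al - g) * Agamma al g n) + (al - g) * g * al ^+ n); first ring.
rewrite IH [al ^+ n.+1]exprS [g ^+ n.+2]exprS; ring.
Qed.

Lemma Cseq_S n : Cseq al g n.+1 = Agamma al g n + al ^+ n.
Proof.
elim: n => [|n IH]; first by rewrite Ag_0 expr0 /=; ring.
change (g * Cseq al g n.+1 + al ^+ n.+1 = Agamma al g n.+1 + al ^+ n.+1).
rewrite IH Ag_S [al ^+ n.+1]exprS; ring.
Qed.
End Seqs.

Unset Implicit Arguments. Set Strict Implicit.

Section Main.
Variables (R : realType) (X A : finType) (M : nat) (samples : nat -> 'I_M -> X -> A -> X).
Variables (a0 : A) (alpha gamma : R) (r : X -> A -> R) (P : X -> A -> X -> R) (vs : X -> R).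
Variables (K : nat) (eb : R).
Hypotheses (hg : 0 <= gamma < 1) (hr : forall x a, -1 <= r x a <= 1) (hP : is_kernel P)
  (hb : bellman_opt a0 gamma r P vs) (ha : 0 <= alpha < 1) (hM : (0 < M)%N) (heb : 0 <= eb)
  (hE : forall k, (1 <= k <= K)%N -> forall x a,
     `| eps samples a0 alpha gamma r P k x a | <= eb).

Local Notation s := (mdvi_s samples a0 alpha gamma r).
Local Notation w := (mdvi_w samples a0 alpha gamma r).
Local Notation wp := (mdvi_wprev samples a0 alpha gamma r).
Local Notation v := (mdvi_v samples a0 alpha gamma r).
Local Notation H := (Hor gamma).

Lemma H1 : (1 - gamma) * H = 1.
Proof. rewrite /Hor mulfV //; case/andP: hg => _ h; lra. Qed.

Lemma Hge1 : 1 <= H.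
Proof.
have := H1; case/andP: hg => g0 g1.
have : 0 < H by rewrite /Hor invr_gt0; lra.
nra.
Qed.

Lemma Hrec : 1 + gamma * H = H.
Proof. have := H1; lra. Qed.

Lemma Phat_abs k (f : X -> R) (B : R) x a : (forall y, `|f y| <= B) -> `|Phat samples k f x a| <= B.
Proof.
move=> hf; rewrite /Phat normrM.
have hM' : (0 : R) < M%:R by rewrite ltr0n.
rewrite (ger0_norm (x := M%:R^-1)); last by rewrite invr_ge0 ltW.
rewrite ler_pdivrMl //.
apply: le_trans (ler_norm_sum _ _ _) _.
apply: le_trans (_ : \sum_(m < M) B <= _).
  by apply: ler_sum => m _; apply: hf.
by rewrite sumr_const card_ord mulr_natl.
Qed.

Lemma vs_bound x : `|vs x| <= H.
Proof.
set B := \big[Num.max/0]_(y : X) `|vs y|.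
have hB : forall y, `|vs y| <= B.
  by move=> y; rewrite /B (bigD1 y) //= le_max lexx.
have B0 : 0 <= B.
  rewrite /B; apply: (big_ind (fun z => 0 <= z)) => //.
  by move=> p q hp hq; rewrite le_max hp.
have hx : forall y, `|vs y| <= 1 + gamma * B.
  move=> y; rewrite (hb y); apply: maxA_abs => a.
  apply: le_trans (ler_normD _ _) _; apply: lerD.
    by rewrite ler_norml; have := hr y a; lra.
  rewrite normrM ger0_norm; last by case/andP: hg.
  apply: ler_wpM2l; first by case/andP: hg.
  by apply: Pop_abs.
have : B <= 1 + gamma * B.
  rewrite /B; apply: (big_ind (fun z => z <= 1 + gamma * B)) => //.
  - case/andP: hg => g0 _; have : 0 <= gamma * B by apply: mulr_ge0. lra.
  - by move=> p q hp hq; rewrite ge_max hp.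
move=> hBB; apply: le_trans (hB x) _.
have := H1; case/andP: hg => g0 g1; nra.
Qed.

Lemma v_bound k x : `|v k x| <= H.
Proof.
elim: k x => [|k IH] x.
  rewrite /mdvi_v w_0 wp_0 mulr0 subr0 normr0; have := Hge1; lra.
rewrite /mdvi_v wp_S w_S.
have -> : w k x = Defs.maxA a0 (s k x).
  case: k IH => [|k] IH; first by rewrite w_0 maxA_const.
  by rewrite w_S.
apply: maxA_absdiff; first by case/andP: ha.
move=> a; rewrite s_S.
have -> : r x a + gamma * Phat samples k (v k) x a + alpha * s k x a - alpha * s k x a
   = r x a + gamma * Phat samples k (v k) x a by ring.
apply: le_trans (ler_normD _ _) _.
rewrite -Hrec; apply: lerD.
  by rewrite ler_norml; have := hr x a; lra.
rewrite normrM ger0_norm; last by case/andP: hg.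
apply: ler_wpM2l; first by case/andP: hg.
by apply: Phat_abs.
Qed.

Lemma w_max k x : w k x = Defs.maxA a0 (s k x).
Proof. by case: k => [|k]; [rewrite w_0 maxA_const | rewrite w_S]. Qed.

Definition Dk k x a := s k x a - Aseq alpha k * r x a - gamma * Pop P (wp k) x a.

Lemma D_S k x a : Dk k.+1 x a = eps samples a0 alpha gamma r P k.+1 x a + alpha * Dk k x a.
Proof.
rewrite /Dk s_S /eps /=.
have e1 : Pop P (wp k.+1) x a = Pop P (w k) x a by apply: Pop_ext => y; rewrite wp_S.
have e2 : Pop P (v k) x a = Pop P (w k) x a - alpha * Pop P (wp k) x a.
  rewrite -PopB //; exact: Pop_ext.
rewrite e1 e2; ring.
Qed.

Lemma D_0 x a : Dk 0 x a = 0.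
Proof.
rewrite /Dk s_0 /=.
have -> : Pop P (wp 0) x a = 0 by rewrite -(Pop_const hP 0 x a); apply: Pop_ext.
ring.
Qed.

Lemma D_bound k : (k <= K)%N -> forall x a, `|Dk k x a| <= Aseq alpha k * eb.
Proof.
elim: k => [|k IH] hk x a; first by rewrite D_0 normr0 /= mul0r.
rewrite D_S.
have h1 := @hE k.+1 hk x a.
have h2 := IH (ltnW hk) x a.
have a0' : 0 <= alpha by case/andP: ha.
apply: le_trans (ler_normD _ _) _.
rewrite normrM (ger0_norm a0') /=.
have : alpha * `|Dk k x a| <= alpha * (Aseq alpha k * eb) by apply: ler_wpM2l.
lra.
Qed.

Definition uk k x := w k x - Aseq alpha k * vs x.

Lemma U_bound k : (k <= K)%N -> forall x,
  `|uk k x| <= H * Agamma alpha gamma k + (1 - alpha)^-1 * H * eb.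
Proof.
have a0' : 0 <= alpha by case/andP: ha.
have g0 : 0 <= gamma by case/andP: hg.
have Hp : 0 <= H by have := Hge1; lra.
have Ai1 : (1 - alpha) * (1 - alpha)^-1 = 1 by rewrite mulfV //; case/andP: ha => _ h; lra.
have Aip : 0 <= (1 - alpha)^-1 by rewrite invr_ge0; case/andP: ha => _ h; lra.
have Rge0 : 0 <= (1 - alpha)^-1 * H * eb by apply: mulr_ge0 => //; apply: mulr_ge0.
elim: k => [|k IH] hk x.
  rewrite /uk w_0 /= mul0r subr0 normr0 Ag_0 mulr0 add0r //.
rewrite /uk w_max.
rewrite (hb x).
have Ap := Aseq_ge0 ha k.+1.
apply: maxA_absdiff => // a.
set A1 := Aseq alpha k.+1.
have hs : s k.+1 x a = Dk k.+1 x a + A1 * r x a + gamma * Pop P (wp k.+1) x a.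
  by rewrite /Dk /A1; ring.
have hpop : Pop P (wp k.+1) x a - A1 * Pop P vs x a
          = Pop P (fun y => uk k y - alpha ^+ k * vs y) x a.
  rewrite -PopB //; apply: Pop_ext => y; rewrite wp_S /uk /A1 Aseq_S //; ring.
have hb1 : `|Pop P (fun y => uk k y - alpha ^+ k * vs y) x a|
     <= H * Agamma alpha gamma k + (1 - alpha)^-1 * H * eb + alpha ^+ k * H.
  apply: Pop_abs => // y.
  apply: le_trans (ler_normB _ _) _; apply: lerD; first exact: IH (ltnW hk) y.
  rewrite normrM ger0_norm ?exprn_ge0 //; apply: ler_wpM2l; [exact: exprn_ge0 | exact: vs_bound].
have hD := D_bound k.+1 hk x a; rewrite -/A1 in hD.
have e : s k.+1 x a - A1 * (r x a + gamma * Pop P vs x a)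
   = Dk k.+1 x a + gamma * (Pop P (fun y => uk k y - alpha ^+ k * vs y) x a).
  by rewrite hs -hpop; ring.
rewrite e; apply: le_trans (ler_normD _ _) _.
rewrite normrM (ger0_norm g0).
have hg1 : gamma * `|Pop P (fun y => uk k y - alpha ^+ k * vs y) x a|
   <= gamma * (H * Agamma alpha gamma k + (1 - alpha)^-1 * H * eb + alpha ^+ k * H).
  by apply: ler_wpM2l.
have hA : A1 * eb <= (1 - alpha)^-1 * eb.
  apply: ler_wpM2r => //.
  have := Aseq_le ha k.+1; rewrite -/A1 => hl.
  have := Ai1; case/andP: ha => _ h1; nra.
have hH : (1 - alpha)^-1 * H * eb = (1 - alpha)^-1 * eb + gamma * ((1 - alpha)^-1 * H * eb).
  by rewrite -{1}Hrec; ring.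
rewrite Ag_S.
lra.
Qed.

Definition xk k x := w k x - wp k x.

Lemma X_bound k : (k <= K)%N -> forall x,
  `|xk k x| <= Cseq alpha gamma k + 2 * H * eb.
Proof.
have a0' : 0 <= alpha by case/andP: ha.
have g0 : 0 <= gamma by case/andP: hg.
have Hp : 0 <= H by have := Hge1; lra.
elim: k => [|k IH] hk x.
  rewrite /xk w_0 wp_0 subr0 normr0 /=; have : 0 <= H * eb by apply: mulr_ge0.
  lra.
rewrite /xk wp_S (w_max k.+1) (w_max k) -[X in _ - X]mul1r.
apply: maxA_absdiff => // a.
have e : s k.+1 x a - 1 * s k x a =
  eps samples a0 alpha gamma r P k.+1 x a + (alpha - 1) * Dk k x a
  + alpha ^+ k * r x a + gamma * Pop P (xk k) x a.
  have hp : Pop P (xk k) x a = Pop P (wp k.+1) x a - 1 * Pop P (wp k) x a.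
    rewrite -PopB //; apply: Pop_ext => y; rewrite /xk wp_S; ring.
  rewrite hp.
  have := D_S k x a; rewrite /Dk Aseq_S => hh.
  lra.
rewrite e.
have h1 := @hE k.+1 hk x a.
have h2 := D_bound k (ltnW hk) x a.
have h3 : (1 - alpha) * `|Dk k x a| <= eb.
  have : (1 - alpha) * `|Dk k x a| <= (1 - alpha) * (Aseq alpha k * eb).
    by apply: ler_wpM2l => //; case/andP: ha => _ h; lra.
  have := Aseq_le ha k; have := Aseq_ge0 ha k.
  move=> p1 p2 p3; apply: le_trans p3 _.
  rewrite mulrA; apply: ler_piMl => //.
have h4 : `|alpha ^+ k * r x a| <= alpha ^+ k.
  rewrite normrM ger0_norm ?exprn_ge0 //; apply: ler_piMr; first exact: exprn_ge0.
  by rewrite ler_norml; have := hr x a; lra.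
have h5 : `|gamma * Pop P (xk k) x a| <= gamma * (Cseq alpha gamma k + 2 * H * eb).
  rewrite normrM (ger0_norm g0); apply: ler_wpM2l => //; apply: Pop_abs => // y.
  exact: IH (ltnW hk) y.
have h6 : `|(alpha - 1) * Dk k x a| = (1 - alpha) * `|Dk k x a|.
  rewrite normrM (ler0_norm (x := alpha - 1)); first ring.
  case/andP: ha => _ h; lra.
have hH : 2 * H * eb = 2 * eb + gamma * (2 * H * eb).
  by rewrite -{1}Hrec; ring.
set t1 := eps _ _ _ _ _ _ _ _ _.
apply: le_trans (ler_normD _ _) _.
apply: le_trans (lerD (ler_normD _ _) (lexx _)) _.
apply: le_trans (lerD (lerD (ler_normD _ _) (lexx _)) (lexx _)) _.
rewrite h6 /=.
lra.
Qed.

Lemma delta_bound k : (k <= K)%N -> forall y,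
  `|v k y - vs y| <= (1 - alpha) * (H * Agamma alpha gamma k + (1 - alpha)^-1 * H * eb)
     + alpha ^+ k * H + alpha * (Cseq alpha gamma k + 2 * H * eb).
Proof.
move=> hk y.
have a0' : 0 <= alpha by case/andP: ha.
have e : v k y - vs y = (1 - alpha) * uk k y - alpha ^+ k * vs y + alpha * xk k y.
  have := Aseq_id alpha k; rewrite /mdvi_v /uk /xk => hh.
  transitivity (w k y - alpha * wp k y - ((1 - alpha) * Aseq alpha k + alpha ^+ k) * vs y).
    by rewrite hh; ring.
  ring.
rewrite e.
apply: le_trans (ler_normD _ _) _.
apply: lerD; last first.
  rewrite normrM (ger0_norm a0'); apply: ler_wpM2l => //; exact: X_bound.
apply: le_trans (ler_normB _ _) _.
apply: lerD.
  rewrite normrM ger0_norm; last by case/andP: ha => _ h; lra.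
  apply: ler_wpM2l; [by case/andP: ha => _ h; lra | exact: U_bound].
rewrite normrM ger0_norm ?exprn_ge0 //; apply: ler_wpM2l; [exact: exprn_ge0 | exact: vs_bound].
Qed.

End Main.

Theorem lemma6 (R : realType) (X A : finType) (a0 : A)
  (gamma alpha delta : R) (r : X -> A -> R) (P : X -> A -> X -> R)
  (vstar : X -> R) (K M : nat) (samples : nat -> 'I_M -> X -> A -> X) :
  0 <= gamma < 1 ->
  (forall x a, -1 <= r x a <= 1) ->
  is_kernel P ->
  bellman_opt a0 gamma r P vstar ->
  0 <= alpha < 1 ->
  (0 < K)%N -> (0 < M)%N ->
  0 < delta < 1 ->
  (* event E_1 *)
  (forall k, (1 <= k <= K)%N -> forall x a,
     `| Ek samples a0 alpha gamma r P k x a |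
       < 3 * Hor gamma * Num.sqrt (Ainf alpha * iota1 X A K delta / M%:R)) ->
  (* event E_2 *)
  (forall k, (1 <= k <= K)%N -> forall x a,
     `| eps samples a0 alpha gamma r P k x a |
       < 3 * Hor gamma * Num.sqrt (iota1 X A K delta / M%:R)) ->
  (forall k, (1 <= k <= K - 1)%N -> forall x a,
     sigmaP P (mdvi_v samples a0 alpha gamma r k) x a
       <= 2 * Hor gamma *
          Num.min 1 (2 * Num.max alpha gamma ^+ (k - 1)
                     + Agamma alpha gamma (k - 1) / Ainf alpha
                     + 6 * Hor gamma * Num.sqrt (iota1 X A K delta / M%:R))
          + sigmaP P vstar x a)
  /\ (forall x a, sigmaP P (mdvi_v samples a0 alpha gamma r 0) x a = 0).
Proof.
move=> hg hr hP hb ha hK hM hd hE1 hE2.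
set H := Hor gamma.
set sq := Num.sqrt (iota1 X A K delta / M%:R).
have Hge : 1 <= H by apply: Hge1.
have sq0 : 0 <= sq by apply: sqrtr_ge0.
set eb := 3 * H * sq.
have heb : 0 <= eb by rewrite /eb; apply: mulr_ge0 => //; apply: mulr_ge0 => //; lra.
have hE : forall k, (1 <= k <= K)%N -> forall x a,
    `|eps samples a0 alpha gamma r P k x a| <= eb.
  by move=> k hk x a; apply: ltW; apply: hE2.
split; last first.
  move=> x a.
  have h0 : forall y, mdvi_v samples a0 alpha gamma r 0 y = 0.
    by move=> y; rewrite /mdvi_v w_0 wp_0 mulr0 subr0.
  rewrite /sigmaP /VarP.
  have -> : Pop P (mdvi_v samples a0 alpha gamma r 0) x a = 0.
    by rewrite -(Pop_const hP 0 x a); apply: Pop_ext => y; rewrite h0.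
  have -> : Pop P (fun y => mdvi_v samples a0 alpha gamma r 0 y ^+ 2) x a = 0.
    by rewrite -(Pop_const hP 0 x a); apply: Pop_ext => y; rewrite h0 expr0n.
  by rewrite expr0n /= subr0 sqrtr0.
move=> k /andP[k1 kK] x a.
case: k k1 kK => [//|n] _ hn.
have hnK : (n.+1 <= K)%N by apply: leq_trans hn (leq_subr 1 K).
rewrite subn1 succnK.
have a0' : 0 <= alpha by case/andP: ha.
have a1 : alpha < 1 by case/andP: ha.
have g0 : 0 <= gamma by case/andP: hg.
have g1 : gamma < 1 by case/andP: hg.
have e6 : 6 * H * sq = 2 * eb by rewrite /eb; ring.
rewrite e6 /Ainf invrK.
set G := Agamma alpha gamma n.
set mm := Num.max alpha gamma ^+ n.
have G0 : 0 <= G by apply: Ag_ge0.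
have mm0 : 0 <= mm by apply: exprn_ge0; rewrite le_max a0'.
set B0 := 2 * mm + G * (1 - alpha) + 2 * eb.
have B00 : 0 <= B0.
  have : 0 <= G * (1 - alpha) by apply: mulr_ge0 => //; lra.
  rewrite /B0; lra.
have Hp : 0 <= H by lra.
apply: sigma_bound => //.
  apply: mulr_ge0; first lra.
  by rewrite minEle; case: ifP.
move=> y.
have hdl := @delta_bound _ _ _ _ samples a0 alpha gamma r P vstar K eb hg hr hP hb ha heb hE n.+1 hnK y.
have hv := @v_bound _ _ _ _ samples a0 alpha gamma r hg hr ha hM n.+1 y.
have hvs := @vs_bound _ _ _ a0 gamma r P vstar hg hr hP hb y.
rewrite -/H in hv hvs hdl; rewrite minEle; case: ifP => _.
  apply: le_trans (ler_normB _ _) _; lra.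
apply: le_trans hdl _.
rewrite -/H Ag_S Cseq_S -/G exprS.
set an := alpha ^+ n.
have a0'' : 0 <= an by apply: exprn_ge0.
have hmax : alpha <= Num.max alpha gamma by rewrite le_max lexx.
have amm : an <= mm.
  apply: lerXn2r; [by rewrite nnegrE | rewrite nnegrE; exact: le_trans a0' hmax | exact: hmax].
have Ai1 : (1 - alpha) * (1 - alpha)^-1 = 1 by rewrite mulfV //; lra.
have HH1 : (1 - gamma) * H = 1 by apply: H1.
have p1 : (1 - alpha) * ((1 - alpha)^-1 * H * eb) = H * eb.
  transitivity (((1 - alpha) * (1 - alpha)^-1) * (H * eb)); first ring.
  by rewrite Ai1 mul1r.
have HG : 0 <= H * G by apply: mulr_ge0.
have p2 : (1 - alpha) * H * gamma * G <= (1 - alpha) * H * G.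
  have : 0 <= (1 - alpha) * (H * G) by apply: mulr_ge0 => //; lra.
  nra.
have p3 : alpha * G <= G by nra.
have idG := Ag_id alpha gamma n; rewrite -/G -/an in idG.
have gn : 0 <= gamma ^+ n.+1 by apply: exprn_ge0.
have p4 : G - H * (1 - alpha) * G <= H * mm.
  have e1 : G - H * (1 - alpha) * G = H * ((alpha - gamma) * G).
    transitivity (((1 - gamma) * H) * G - H * (1 - alpha) * G); first by rewrite HH1 mul1r.
    ring.
  rewrite e1 idG.
  have : gamma * an <= mm by nra.
  have : 0 <= H * gamma ^+ n.+1 by apply: mulr_ge0.
  nra.
have p5 : (1 - alpha) * H * gamma * an + alpha * an * H <= H * an.
 have hh : 0 <= (H * an) * ((1 - alpha) * (1 - gamma)).
    apply: mulr_ge0; apply: mulr_ge0 => //; lra.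
  nra.
have p6 : H * an <= H * mm by apply: ler_wpM2l.
have p6' : mm <= H * mm by nra.
have p7 : alpha * (H * eb) <= H * eb.
  have : 0 <= H * eb by apply: mulr_ge0.
  nra.
have : 0 <= H * eb by apply: mulr_ge0.
rewrite /B0; nra.
Qed.
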